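(* Let $(X,G)$ be a minimal topological dynamical system, where $G$ is amenable. If $(x_1,\dots,x_K)\in X^K$ is a weakly mean-sensitive tuple, then for any open neighborhoods $U_k$ of $x_k$, $k=1,\dots,K$, one has $\nu_{eq}\big(\bigcap_{k=1}^K\pi_{eq}(U_k)\big)>0$.
   Context: $G$ is an infinite countable discrete group; a tds $(X,G)$ is a compact metric space $(X,d)$ with a $G$-action by homeomorphisms; minimal means no proper nonempty closed invariant subset. $\pi_{eq}:X\to X_{eq}$ is the factor map onto the maximal equicontinuous factor, $\nu_{eq}$ the unique invariant probability measure of $(X_{eq},G)$. For $F\subset G$, $\overline{BD}(F)=\max_{\{F_n\}}\limsup_n|F_n\cap F|/|F_n|$ over all Følner sequences of $G$. $(x_1,\dots,x_K)$ is a weakly mean-sensitive tuple if for all open neighborhoods $U_k\ni x_k$ there is $\delta>0$ such that for every nonempty open $U\subset X$, $\overline{BD}(\{g\in G: gU\cap U_k\neq\emptyset \text{ for } 1\le k\le K\})>\delta$. *)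

(* Defs.v *)
From HB Require Import structures.
From mathcomp Require Import all_boot all_order all_algebra.
From mathcomp Require Import monoid.
From mathcomp Require Import finmap.
From mathcomp Require Import all_classical all_reals all_analysis.
Set Implicit Arguments. Unset Strict Implicit. Unset Printing Implicit Defensive.
Import Order.TTheory GRing.Theory Num.Theory.
Import numFieldTopology.Exports numFieldNormedType.Exports.

Local Open Scope classical_set_scope.
Local Open Scope ring_scope.

(* Borel sigma-algebra on a topological space.  The library construction
   g_sigma_algebraType needs a pointed type, so we attach an (irrelevant)
   point t to the carrier.                                             *)
Definition pointed_at (T : choiceType) (t : T) : Type := T.
HB.instance Definition _ (T : choiceType) (t : T) := Choice.on (pointed_at t).
HB.instance Definition _ (T : choiceType) (t : T) :=
  isPointed.Build (pointed_at t) t.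

Definition borel_at (T : topologicalType) (t : T) :=
  g_sigma_algebraType (@open T : set (set (pointed_at t))).

Section Dyn.
Variable G : groupType.

Definition is_action (X : topologicalType) (act : G -> X -> X) : Prop :=
  [/\ (forall x, act 1%g x = x),
      (forall g h x, act (g * h)%g x = act g (act h x)) &
      (forall g, continuous (act g))].

Definition tds (R : realType) (X : metricType R) (act : G -> X -> X) : Prop :=
  compact [set: X] /\ is_action act.

Definition minimal (X : topologicalType) (act : G -> X -> X) : Prop :=
  forall A : set X, closed A -> A !=set0 ->
    (forall g, act g @` A `<=` A) -> A = [set: X].

Definition factor_map (X Y : topologicalType) (actX : G -> X -> X)
    (actY : G -> Y -> Y) (p : X -> Y) : Prop :=
  [/\ continuous p, (forall y, exists x, p x = y) &
      (forall g x, p (actX g x) = actY g (p x))].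

Definition equicontinuous (R : realType) (Y : metricType R)
    (act : G -> Y -> Y) : Prop :=
  forall e : R, 0 < e -> exists2 d : R, 0 < d &
    forall y y' : Y, mdist y y' < d -> forall g, mdist (act g y) (act g y') < e.

Definition max_equicontinuous_factor (R : realType) (X Y : metricType R)
    (actX : G -> X -> X) (actY : G -> Y -> Y) (p : X -> Y) : Prop :=
  [/\ tds actY, equicontinuous actY, factor_map actX actY p &
      forall (Z : metricType R) (actZ : G -> Z -> Z) (q : X -> Z),
        tds actZ -> equicontinuous actZ -> factor_map actX actZ q ->
        exists2 phi : Y -> Z, factor_map actY actZ phi & q = phi \o p].

Local Open Scope fset_scope.

Definition left_translate (g : G) (F : {fset G}) : {fset G} :=
  [fset (g * h)%g | h in F].

Definition symdiff (A B : {fset G}) : {fset G} := (A `\` B) `|` (B `\` A).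

Definition Folner (R : realType) (F : nat -> {fset G}) : Prop :=
  (forall n, F n != fset0) /\
  forall g : G,
    (fun n => (#|` symdiff (left_translate g (F n)) (F n)|%:R
               / #|` F n|%:R : R)) @ \oo --> (0 : R).

Definition density_in (R : realType) (F : {fset G}) (S : set G) : R :=
  #|` [fset g in F | `[< S g >]] |%:R / #|` F|%:R.

Definition upper_Banach_density (R : realType) (S : set G) : \bar R :=
  ereal_sup [set limn_esup (fun n => (density_in R (F n) S)%:E) |
             F in [set F | Folner R F]].

(* a countable discrete group is amenable iff it has a Følner sequence *)
Definition amenable (R : realType) : Prop := exists F, Folner R F.

Local Close Scope fset_scope.

Definition weakly_mean_sensitive (R : realType) (X : metricType R)
    (act : G -> X -> X) (K : nat) (x : 'I_K -> X) : Prop :=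
  forall U : 'I_K -> set X, (forall k, open (U k) /\ U k (x k)) ->
    exists2 delta : R, 0 < delta &
      forall V : set X, open V -> V !=set0 ->
        (delta%:E < upper_Banach_density R
           [set g | forall k, (act g @` V `&` U k) !=set0])%E.

End Dyn.

(* Main.v *)
Require Import Defs.
From HB Require Import structures.
From mathcomp Require Import all_boot all_order all_algebra.
From mathcomp Require Import monoid finmap.
From mathcomp Require Import all_classical all_reals all_analysis.
From mathcomp Require Import zify ring lra.
Import Order.TTheory GRing.Theory Num.Theory.
Import numFieldTopology.Exports numFieldNormedType.Exports.
Set Implicit Arguments. Unset Strict Implicit. Unset Printing Implicit Defensive.
Local Open Scope classical_set_scope.
Local Open Scope ring_scope.
Section Counting.
Variable G : groupType.
Local Open Scope fset_scope.
Local Open Scope nat_scope.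

Lemma count_fset_filter (F : {fset G}) (P : pred G) :
  #|` [fset g in F | P g]| = count P F.
Proof.
rewrite -size_filter.
have := @uniq_size_uniq _ (seq.filter P F) [fset g in F | P g].
rewrite filter_uniq ?fset_uniq // => /(_ isT).
move=> H; apply/eqP; rewrite -H //.
by move=> x; rewrite mem_filter !inE andbC.
Qed.

Lemma count_le_split (s : seq G) (a b c : pred G) :
  (forall x, a x -> b x || c x) -> count a s <= count b s + count c s.
Proof.
move=> H; elim: s => //= x s IH.
have := H x; case: (a x) => /=; last by lia.
by move=> /(_ isT); case: (b x); case: (c x) => //= _; lia.
Qed.

Lemma count_inj (s t : seq G) (P Q : pred G) (f : G -> G) :
  uniq s -> injective f ->
  (forall x, x \in s -> P x -> f x \in t -> Q (f x)) ->
  count P s <= count Q t + count (fun x => f x \notin t) s.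
Proof.
move=> us injf H.
apply: (leq_trans (count_le_split s (b := fun x => P x && (f x \in t))
   (c := fun x => f x \notin t) _)).
  by move=> x Px; rewrite Px /=; case: (f x \in t).
rewrite leq_add2r -!size_filter.
rewrite -(size_map f).
apply: uniq_leq_size.
  by rewrite (map_inj_uniq injf) filter_uniq.
move=> y /mapP [x]; rewrite mem_filter => /andP[/andP[Px ft] xs] ->.
by rewrite mem_filter H.
Qed.

Lemma miss_le_symdiff (g : G) (F : {fset G}) :
  count (fun x => (g * x)%g \notin F) F <= #|` symdiff (left_translate g F) F|.
Proof.
rewrite -size_filter -(size_map ( *%g g)).
apply: uniq_leq_size.
  by rewrite (map_inj_uniq (@mulgI _ g)) filter_uniq ?fset_uniq.
move=> y /mapP [x]; rewrite mem_filter => /andP[gx xF] ->.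
rewrite /symdiff !inE gx /=; apply/orP; left.
by apply/imfsetP; exists x.
Qed.

End Counting.
Section F.
Variable G : groupType.
Local Open Scope fset_scope.
Lemma folner_near (R : realType) (F : nat -> {fset G}) (L : seq G) (tau : R) :
  Folner R F -> 0 < tau ->
  \forall n \near \oo, forall g, g \in L ->
    (#|` symdiff (left_translate g (F n)) (F n)|%:R <= tau * #|` F n|%:R :> R).
Proof.
move=> [Fn0 FF] tau0; elim: L => [|g L IH].
  by apply: nearW => n g; rewrite in_nil.
have Hg : \forall n \near \oo,
    `|#|` symdiff (left_translate g (F n)) (F n)|%:R / #|` F n|%:R| < tau.
  by apply: cvgr0_norm_lt => //; exact: FF.
apply: filterS (filterI IH Hg) => n [IHn Hgn] h.
rewrite in_cons => /orP[/eqP ->|hL]; last exact: IHn.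
have Fpos : (0 < #|` F n|%:R :> R) by rewrite ltr0n cardfs_gt0.
move: Hgn; rewrite ger0_norm ?divr_ge0 // ltr_pdivrMr // => H.
exact: ltW.
Qed.

End F.
Lemma limn_esup_gt_ex (R : realType) (u : (\bar R)^nat) (a : \bar R) (P : nat -> Prop) :
  (a < limn_esup u)%E -> (\forall n \near \oo, P n) -> exists n, P n /\ (a < u n)%E.
Proof.
move=> au [N _ HN].
have : (a < esups u N)%E.
  apply: (lt_le_trans au); rewrite limn_esup_lim.
  have -> : limn (esups u) = ereal_inf (range (esups u)).
    by apply/cvg_lim => //; exact: cvg_esups_inf.
  by apply: ereal_inf_lbound; exists N.
rewrite /esups /= => /ereal_sup_gt [_ [k /= Nk <-] ak].
by exists k; split => //; apply: HN.
Qed.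
Lemma count_measure_bound d (T : measurableType d) (R : realType)
  (mu : probability T R) (I : Type) (s : seq I) (B : I -> set T) (c : R) :
  (forall i, measurable (B i)) ->
  (forall z, c <= (count (fun i => `[< B i z >]) s)%:R) ->
  (c%:E <= \sum_(i <- s) mu (B i))%E.
Proof.
move=> mB Hc.
have [c0|c0] := leP c 0.
  by apply: (@le_trans _ _ 0%E); [rewrite lee_fin|apply: sume_ge0].
have -> : c%:E = (\int[mu]_(x in [set: T]) (cst c%:E) x)%E.
  by rewrite integral_cst //= (@probability_setT _ _ _ mu) mule1.
have -> : (\sum_(i <- s) mu (B i) =
    \sum_(i <- s) \int[mu]_(x in [set: T]) (\1_(B i) x)%:E)%E.
  by apply: eq_bigr => i _; rewrite integral_indic // setIT.
rewrite -ge0_integral_sum //; last first.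
  by move=> i; apply/measurable_realfun.measurable_EFinP/measurable_realfun.measurable_indic.
- apply: ge0_le_integral => //.
  + by move=> x _; rewrite lee_fin ltW.
  + by apply: emeasurable_sum => i; apply/measurable_realfun.measurable_EFinP/measurable_realfun.measurable_indic.
  + move=> x _ /=; rewrite sumEFin lee_fin (le_trans (Hc x)) //.
    rewrite -sum1_count natr_sum big_mkcond /=; apply: ler_sum => i _.
    by rewrite indicE; case: asboolP => //= Bi; rewrite mem_set.
Qed.
Section Topo.
Variables (R : realType) (Y : metricType R).
Implicit Types (A C : set Y) (y z : Y).

Lemma mdistC y z : mdist y z = mdist z y.
Proof. exact: metric_sym. Qed.

Lemma mdist_tri y z w : mdist y w <= mdist y z + mdist z w.
Proof. exact: metric_triangle. Qed.

Lemma nbhs_mdist y (B : set Y) : nbhs y B -> exists2 e, 0 < e & forall z, mdist y z < e -> B z.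
Proof.
move=> /nbhs_ballP [e e0 H]; exists e => // z yz; apply: H.
by rewrite ballEmdist.
Qed.

Lemma mdist_nbhs y e : 0 < e -> nbhs y [set z | mdist y z < e].
Proof. by move=> e0; rewrite -ballEmdist; apply: nbhsx_ballx. Qed.

Lemma closure_mdist A y : closure A y -> forall e, 0 < e -> exists2 a, A a & mdist y a < e.
Proof.
move=> cl e e0; have [a [Aa ya]] := cl _ (mdist_nbhs y e0).
by exists a.
Qed.

Lemma mdist_closure A y : (forall e, 0 < e -> exists2 a, A a & mdist y a < e) -> closure A y.
Proof.
move=> H B /nbhs_mdist [e e0 HB]; have [a Aa ya] := H e e0.
by exists a; split => //; apply: HB.
Qed.

Lemma open_nbhd C e : open [set y | exists2 c, C c & mdist c y < e].
Proof.
rewrite openE => y [c Cc cy]; rewrite /interior.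
have : nbhs y [set z | mdist y z < e - mdist c y] by apply: mdist_nbhs; rewrite subr_gt0.
apply: filterS => z yz; exists c => //.
by apply: (le_lt_trans (mdist_tri c y z)); rewrite -ltrBrDl.
Qed.

Lemma closure_ball2 (x : Y) r : 0 < r -> closure [set z | mdist x z < r] `<=` [set z | mdist x z < 2 * r].
Proof.
move=> r0 y /closure_mdist /(_ r r0) [a xa ya].
rewrite /= (le_lt_trans (mdist_tri x a y)) // mulr2n mulrDl mul1r ltrD // mdistC //.
Qed.

Lemma open_mball (c : Y) r : open [set y | mdist c y < r].
Proof.
have -> : [set y | mdist c y < r] = [set y | exists2 c', [set c] c' & mdist c' y < r].
  by apply/seteqP; split => [y cy|y [_ -> //]]; exists c.
exact: open_nbhd.
Qed.
End Topo.
Definition ptop (T : topologicalType) (t : T) : Type := T.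
HB.instance Definition _ (T : topologicalType) (t : T) := Topological.on (ptop t).
HB.instance Definition _ (T : topologicalType) (t : T) := isPointed.Build (ptop t) t.

Lemma finite_cover (T : topologicalType) (I : choiceType) (f : I -> set T) :
  compact [set: T] -> (forall i, open (f i)) -> (forall t, exists i, f i t) ->
  exists s : seq I, forall t, exists2 i, i \in s & f i t.
Proof.
move=> cT fo cov.
have [t|T0] := pselect (exists t : T, True); last first.
  by exists [::] => t; exfalso; apply: T0; exists t.
case: t => t _.
have : compact [set: ptop t] by exact: cT.
rewrite compact_cover => /(_ I setT f (fun i _ => fo i)).
case=> [u _|D' _ H]; first by have [i fi] := cov u; exists i.
exists D' => u; have [i Di fit] := H u Logic.I; exists i => //.
Qed.

Section Minimal.
Variables (R : realType) (G : groupType) (X Y : metricType R).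
Variables (actX : G -> X -> X) (actY : G -> Y -> Y) (p : X -> Y).
Hypothesis actYa : is_action actY.
Hypothesis fp : factor_map actX actY p.
Hypothesis minX : minimal actX.
Hypothesis cY : compact [set: Y].

Lemma orbit_near (c : Y) (r : R) : 0 < r -> forall z, exists k, mdist c (actY k z) < r.
Proof.
move=> r0 z; have [act1 actM actc] := actYa; have [pc psurj pe] := fp.
apply: contrapT => /forallNP Hz.
pose Z := [set z' | forall k, ~ (mdist c (actY k z') < r)].
have clZ : closed Z.
  have -> : Z = \bigcap_(k in [set: G]) (actY k @^-1` ~` [set y | mdist c y < r]).
    by apply/seteqP; split => [y Hy k _|y Hy k]; [exact: Hy | exact: (Hy k Logic.I)].
  apply: closed_bigI => k _; apply: (proj1 (continuous_closedP _) (actc k)).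
  by rewrite closedC; apply: open_mball.
have Zinv : forall g, actY g @` Z `<=` Z.
  by move=> g _ [z' Zz' <-] k; rewrite -actM; apply: Zz'.
have Zz : Z z by move=> k; apply: Hz.
pose Z' := p @^-1` Z.
have Z'T : Z' = [set: X].
  apply: minX.
  - exact: (proj1 (continuous_closedP _) pc _ clZ).
  - by have [x xz] := psurj z; exists x; rewrite /Z' /= xz.
  - by move=> g _ [x Z'x <-]; rewrite /Z' /= pe; apply: Zinv; exists (p x).
have [x px] := psurj c.
have : Z' x by rewrite Z'T.
rewrite /Z' /= px => /(_ 1%g); rewrite act1 mdistxx; apply; exact: r0.
Qed.

Lemma uniform_orbit (eta : R) : 0 < eta ->
  exists K : seq G, forall z z', exists2 k, k \in K & mdist z (actY k z') < eta.
Proof.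
move=> eta0; have eta2 : 0 < eta / 2 by rewrite divr_gt0.
have [act1 actM actc] := actYa.
have [cs Hcs] := @finite_cover Y Y (fun c => [set y | mdist c y < eta / 2]) cY
  (fun c => open_mball c _) (fun t => ex_intro _ t (eq_ind_r (fun a => a < _) eta2 (mdistxx t))).
have Hc : forall c, exists Kc : seq G, forall z', exists2 k, k \in Kc & mdist c (actY k z') < eta / 2.
  move=> c; apply: (@finite_cover Y G (fun k => [set z' | mdist c (actY k z') < eta / 2]) cY).
  - by move=> k; exact: (proj1 (continuousP _) (actc k) _ (open_mball _ _)).
  - by move=> t; apply: orbit_near.
have [Kf HKf] : exists Kf : Y -> seq G, forall c z', exists2 k, k \in Kf c & mdist c (actY k z') < eta / 2.
  have := choice Hc; case=> Kf HKf; by exists Kf.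
exists (flatten (map Kf cs)) => z z'.
have [c cin zc] := Hcs z; have [k kin ck] := HKf c z'.
exists k; first by apply/flattenP; exists (Kf c) => //; apply: map_f.
rewrite (le_lt_trans (mdist_tri z c _)) // (splitr eta) ltrD // mdistC //.
Qed.
End Minimal.
Section Meas.
Variables (R : realType) (Y : metricType R) (y0 : Y).
Lemma open_meas (A : set Y) : open A -> measurable (A : set (borel_at y0)).
Proof. by move=> oA; apply: sub_sigma_algebra. Qed.
Lemma closed_meas (A : set Y) : closed A -> measurable (A : set (borel_at y0)).
Proof.
move=> cA; rewrite -(setCK A); apply: measurableC; apply: open_meas.
by rewrite openC.
Qed.

Lemma image_open_meas (X : metricType R) (p : X -> Y) (U : set X) :
  compact [set: X] -> continuous p -> open U -> measurable (p @` U : set (borel_at y0)).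
Proof.
move=> cX cp oU.
pose K n := [set x | forall z, mdist x z < n.+1%:R^-1 -> U z].
have -> : p @` U = \bigcup_(n in [set: nat]) (p @` K n).
  apply/seteqP; split => [_ [x Ux <-]|_ [n _ [x Kx <-]]].
    have : nbhs x U by move: oU; rewrite openE => /(_ x Ux).
    move=> /nbhs_mdist [e e0 He].
    have [N _ HN] := near_infty_natSinv_lt (PosNum e0).
    exists N => //; exists x => // z xz; apply: He.
    by apply: lt_trans xz (HN N (leqnn N)).
  by exists x => //; apply: Kx; rewrite mdistxx invr_gt0.
apply: bigcup_measurable => n _; apply: closed_meas.
apply: compact_closed; first exact: metric_hausdorff.
apply: continuous_compact; first exact: continuous_subspaceT.
apply: (subclosed_compact _ cX) => //.
rewrite closure_id; apply/seteqP; split; first exact: subset_closure.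
move=> x clx z xz.
have s0 : 0 < n.+1%:R^-1 - mdist x z by rewrite subr_gt0.
have [x' Kx' xx'] := closure_mdist clx s0.
apply: Kx'; apply: (le_lt_trans (mdist_tri x' x z)).
by rewrite mdistC -ltrBrDr.
Qed.
End Meas.
Lemma count_exchange (I J : Type) (s : seq I) (t : seq J) (P : I -> J -> bool) :
  (\sum_(i <- s) count (P i) t = \sum_(j <- t) count (fun i => P i j) s)%N.
Proof.
have cE : forall (T : Type) (a : pred T) (r : seq T), count a r = (\sum_(x <- r) (a x : nat))%N.
  by move=> T a r; rewrite -sum1_count big_mkcond /=; apply: eq_bigr => x _; case: (a x).
under eq_bigr do rewrite cE.
rewrite exchange_big /=; apply: eq_bigr => j _; by rewrite cE.
Qed.

Section Core.
Variables (R : realType) (G : groupType) (Y : metricType R) (actY : G -> Y -> Y) (y0 : Y).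
Variable (nu : probability (borel_at y0) R).
Hypothesis act1 : forall y, actY 1%g y = y.
Hypothesis actM : forall g h y, actY (g * h)%g y = actY g (actY h y).
Hypothesis actc : forall g, continuous (actY g).
Hypothesis nuinv : forall g (A : set (borel_at y0)), measurable A -> nu (actY g @^-1` A) = nu A.


Lemma core (A B : set Y) (eta : R) (K : seq G) (Fs : nat -> {fset G}) (S : set G)
    (delta tau : R) (yb : Y) :
  Folner R Fs -> open B -> 0 < tau ->
  (forall z z', exists2 k, k \in K & mdist z (actY k z') < eta) ->
  (forall z z' g, mdist z z' < eta -> A (actY g z) -> B (actY g z')) ->
  (forall g, S g -> A (actY g yb)) ->
  (delta%:E < limn_esup (fun n => (density_in R (Fs n) S)%:E))%E ->
  delta < fine (nu B) + tau *+ 2.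
Proof.
move=> FF oB tau0 HK HAB HSA dlt.
have [Fn0 _] := FF.
have mB : measurable (B : set (borel_at y0)) by apply: open_meas.
set b := fine (nu B).
have nuBE : nu B = b%:E by rewrite fineK // fin_num_measure.
have mBh : forall g, measurable (actY g @^-1` B : set (borel_at y0)).
  move=> g; have o := proj1 (continuousP _) (@actc g) _ oB; by apply: open_meas.
have [N _ HN] := folner_near (map (fun k => k^-1)%g K) FF tau0.
set E := Fs N; have HE := HN N (leqnn N).
set e := #|` E|; have e0 : (0 < e)%N by rewrite cardfs_gt0 Fn0.
have C1 : forall z, (count (fun h => `[< A (actY h^-1%g z) >]) E)%:R <= e%:R * b + tau * e%:R.
  move=> z.
  have : (((count (fun h => `[< A (actY h^-1%g z) >]) E)%:R - tau * e%:R)%:E <=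
          \sum_(h <- E) nu (actY h^-1%g @^-1` B))%E.
    apply: count_measure_bound => [h|z']; first exact: mBh.
    have [k kK zk] := HK z z'.
    have H1 : (count (fun h => `[< A (actY h^-1%g z) >]) E <=
               count (fun h => `[< B (actY h^-1%g (actY k z')) >]) E)%N.
      by apply: sub_count => h /asboolP Ah; apply/asboolP; apply: HAB Ah.
    have H2 : (count (fun h => `[< B (actY h^-1%g (actY k z')) >]) E <=
               count (fun h => `[< (actY h^-1%g @^-1` B) z' >]) E +
               count (fun h => (k^-1 * h)%g \notin E) E)%N.
      apply: count_inj; first exact: fset_uniq.
        exact: mulgI.
      move=> h _ /asboolP Bh _; apply/asboolP => /=.
      by rewrite invgM invgK actM.
    have H3 := miss_le_symdiff k^-1%g E.
    have H4 : (#|` symdiff (left_translate k^-1 E) E|%:R <= tau * e%:R :> R).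
      by apply: HE; apply: map_f.
    rewrite lerBlDr; apply: (@le_trans _ _ ((count (fun h => `[< (actY h^-1%g @^-1` B) z' >]) E +
        count (fun h => (k^-1 * h)%g \notin E) E)%N%:R)).
      by rewrite ler_nat (leq_trans H1 H2).
    by rewrite natrD lerD2l (le_trans _ H4) // ler_nat.
  rewrite (eq_bigr (fun _ => b%:E)) => [|h _]; last by rewrite nuinv // nuBE.
  rewrite sumEFin lee_fin big_const_seq count_predT iter_addr_0 -/e lerBlDr => H.
  by rewrite (le_trans H) // mulr_natl.
have [n [Hn dn]] := limn_esup_gt_ex dlt (folner_near E FF tau0).
set F := Fs n in Hn dn *; set f := #|` F|.
have f0 : (0 < f)%N by rewrite cardfs_gt0 Fn0.
move: dn; rewrite lte_fin /density_in count_fset_filter -/f => dn.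
set cT := count (fun g => `[< A (actY g yb) >]) F.
have cST : (count (fun g => `[< S g >]) F <= cT)%N.
  by apply: sub_count => g /asboolP Sg; apply/asboolP; apply: HSA.
have Hh : forall h, h \in E -> (cT <= count (fun g => `[< A (actY h^-1%g (actY g yb)) >]) F +
    count (fun g => (h * g)%g \notin F) F)%N.
  move=> h _; apply: count_inj; [exact: fset_uniq | exact: mulgI | ].
  by move=> g _ /asboolP Ag _; apply/asboolP; rewrite -actM mulKg.
have Hsum : (e * cT <= \sum_(h <- E) count (fun g => `[< A (actY h^-1%g (actY g yb)) >]) F +
    \sum_(h <- E) #|` symdiff (left_translate h F) F|)%N.
  rewrite -big_split /=.
  have -> : (e * cT = \sum_(h <- E) cT)%N by rewrite big_const_seq count_predT iter_addn_0 mulnC.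
  rewrite big_seq [X in (_ <= X)%N]big_seq; apply: leq_sum => h hE.
  by apply: leq_trans (Hh h hE) _; rewrite leq_add2l miss_le_symdiff.
have R1 : e%:R * cT%:R <= f%:R * (e%:R * b + tau * e%:R) + e%:R * (tau * f%:R).
  move: Hsum; rewrite count_exchange -(ler_nat R) natrD !natr_sum natrM => Hs.
  apply: (le_trans Hs); apply: lerD.
    rewrite big_seq; apply: (@le_trans _ _ (\sum_(g <- F | g \in F) (e%:R * b + tau * e%:R))).
      by apply: ler_sum => g _; apply: C1.
    by rewrite -big_seq big_const_seq count_predT iter_addr_0 [leRHS]mulr_natl.
  rewrite big_seq; apply: (@le_trans _ _ (\sum_(h <- E | h \in E) (tau * f%:R))).
    by apply: ler_sum => h hE; apply: Hn.
  by rewrite -big_seq big_const_seq count_predT iter_addr_0 [leRHS]mulr_natl.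
have R2 : cT%:R <= f%:R * (b + tau *+ 2).
  have e0' : (0 : R) < e%:R by rewrite ltr0n.
  rewrite -(ler_pM2l e0'); apply: (le_trans R1).
  rewrite le_eqVlt; apply/orP; left; apply/eqP; rewrite mulr2n; ring.
have f0' : (0 : R) < f%:R by rewrite ltr0n.
apply: (lt_le_trans dn); rewrite ler_pdivrMr //.
rewrite mulrC; apply: le_trans R2; by rewrite ler_nat.
Qed.
End Core.

Lemma open_Aeps (R : realType) (Y : metricType R) (I : finType) (C : I -> set Y) e :
  open [set y | forall i, exists2 c, C i c & mdist c y < e].
Proof.
rewrite openE => y Hy; rewrite /interior; apply: filter_forall => i.
by have := open_nbhd (C i) e; rewrite openE => /(_ y (Hy i)).
Qed.

Unset Implicit Arguments.
Set Strict Implicit.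
Theorem lemma5p4 (R : realType) (G : groupType)
    (X : metricType R) (actX : G -> X -> X)
    (Y : metricType R) (actY : G -> Y -> Y) (pi_eq : X -> Y) (y0 : Y)
    (nu_eq : probability (borel_at y0) R) (K : nat) (x : 'I_K -> X) :
  countable [set: G] -> infinite_set [set: G] -> amenable G R ->
  tds actX -> minimal actX ->
  max_equicontinuous_factor actX actY pi_eq ->
  (forall (g : G) (A : set (borel_at y0)), measurable A ->
     nu_eq (actY g @^-1` A) = nu_eq A) ->
  weakly_mean_sensitive actX x ->
  forall U : 'I_K -> set X, (forall k, open (U k) /\ U k (x k)) ->
  (0 < nu_eq (\bigcap_(k in [set: 'I_K]) (pi_eq @` U k)))%E.
Proof.
move=> _ _ _ [cX actXa] minX [[cY actYa] equiY fp _] nuinv wms U HU.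
have [act1 actM actc] := actYa.
have [pc psurj pe] := fp.
have Hr : forall k, exists r : R, 0 < r /\ forall z, mdist (x k) z < 2 * r -> U k z.
  move=> k; have [oU Ux] := HU k.
  have : nbhs (x k) (U k) by move: oU; rewrite openE => /(_ _ Ux).
  move=> /nbhs_mdist [e e0 He]; exists (e / 2); split; first by rewrite divr_gt0.
  by move=> z; rewrite mulrC divfK ?pnatr_eq0 //; apply: He.
have [r Hr'] := choice Hr.
pose U' k := [set z | mdist (x k) z < r k].
have HU' : forall k, open (U' k) /\ U' k (x k).
  by move=> k; split; [apply: open_mball | rewrite /U' /= mdistxx; case: (Hr' k)].
pose C k := pi_eq @` closure (U' k).
have CU : forall k, C k `<=` pi_eq @` U k.
  move=> k _ [z cz <-]; exists z => //; have [r0 Hk] := Hr' k.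
  by apply: Hk; apply: closure_ball2.
have Cclosed : forall k, closed (C k).
  move=> k; apply: compact_closed; first exact: metric_hausdorff.
  apply: continuous_compact; first exact: continuous_subspaceT.
  by apply: (subclosed_compact _ cX) => //; exact: closed_closure.
have [delta delta0 Hdelta] := wms U' HU'.
pose Aeps e := [set y | forall k, exists2 c, C k c & mdist c y < e].
have Hest : forall e, 0 < e -> (delta%:E <= nu_eq (Aeps e))%E.
  move=> e e0; have e20 : 0 < e / 2 by rewrite divr_gt0.
  have [eta eta0 Heta] := equiY _ e20.
  have [Ks HKs] := uniform_orbit actYa fp minX cY eta0.
  pose V := pi_eq @^-1` [set y | mdist y0 y < eta].
  have oV : open V by exact: (proj1 (continuousP _) pc _ (open_mball _ _)).
  have V0 : V !=set0 by have [x0 px0] := psurj y0; exists x0; rewrite /V /= px0 mdistxx.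
  have := Hdelta V oV V0; rewrite /upper_Banach_density => /ereal_sup_gt [_ [Fs FFs <-] dlt].
  have FF : Folner R Fs := FFs.
  have oB : open (Aeps e) := open_Aeps C e.
  have mB : measurable (Aeps e : set (borel_at y0)) by apply: open_meas.
  have nuE : nu_eq (Aeps e) = (fine (nu_eq (Aeps e)))%:E by rewrite fineK // fin_num_measure.
  suff H : forall tau, 0 < tau -> delta < fine (nu_eq (Aeps e)) + tau *+ 2.
    rewrite nuE lee_fin; apply/ler_addgt0Pr => t t0.
    have t20 : 0 < t / 2 by rewrite divr_gt0.
    by apply/ltW; move: (H _ t20); rewrite mulr2n -splitr.
  move=> tau tau0.
  apply: (core actM actc nuinv (A := Aeps (e / 2)) (yb := y0) FF oB tau0 HKs _ _ dlt).
  - move=> z z' g zz' Ag k; have [c Cc cg] := Ag k; exists c => //.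
    apply: le_lt_trans (mdist_tri c (actY g z) (actY g z')) _.
    by rewrite (splitr e) ltrD // Heta.
  - move=> g Hg k.
    have [_ [[v Vv <-] U'v]] := Hg k.
    exists (pi_eq (actX g v)).
      by exists (actX g v) => //; apply: subset_closure.
    rewrite pe mdistC; apply: Heta; exact: Vv.
pose D j := Aeps j.+1%:R^-1.
have mD : forall j, measurable (D j : set (borel_at y0)).
  by move=> j; apply: open_meas; apply: open_Aeps.
have mcap : measurable (\bigcap_j D j : set (borel_at y0)).
  by apply: bigcap_measurable => //; exists 0%N.
have ninc : nonincreasing_seq D.
  move=> i j ij; apply/subsetPset => z Hz k; have [c Cc cz] := Hz k; exists c => //.
  apply: (lt_le_trans cz); rewrite lef_pV2 ?posrE ?ler_nat //.
have fin0 : (nu_eq (D 0%N) < +oo)%E.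
  by rewrite (le_lt_trans (probability_le1 _ (mD 0%N))) // ltry.
have cv := nonincreasing_cvg_mu fin0 mD mcap ninc.
have le1 : (delta%:E <= nu_eq (\bigcap_j D j))%E.
  rewrite -(cvg_lim _ cv) //; apply: lime_ge; first by apply/cvg_ex; eexists; exact: cv.
  by apply: nearW => j; apply: Hest; rewrite invr_gt0.
have sub : \bigcap_j D j `<=` \bigcap_(k in [set: 'I_K]) (pi_eq @` U k).
  move=> y Hy k _; apply: CU; rewrite ((closure_id (C k)).1 (Cclosed k)).
  apply: mdist_closure => e' e'0.
  have [N _ HN] := near_infty_natSinv_lt (PosNum e'0).
  have [c Cc cy] := Hy N Logic.I k; exists c => //.
  by rewrite mdistC; apply: lt_trans cy (HN N (leqnn N)).
have mP : measurable (\bigcap_(k in [set: 'I_K]) (pi_eq @` U k) : set (borel_at y0)).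
  apply: fin_bigcap_measurable; first exact: finite_finset.
  by move=> k _; apply: image_open_meas => //; case: (HU k).
apply: (lt_le_trans _ (le_trans le1 (le_measure _ (mem_set mcap) (mem_set mP) sub))).
by rewrite lte_fin.
Qed.
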